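(* Let $\epsilon_1,\epsilon_2,\dots$ be independent Rademacher random variables and $S_m=\epsilon_1+\dots+\epsilon_m$ (with $S_0=0$). For $n\ge1$ define the intervals $$A_n=[-1-\sqrt n,\,-\sqrt{n-1}),\qquad B_n=[-\sqrt{n-1},\,1-\sqrt n).$$ Let $k\ge 2$ be an integer. Then: (i) For $n=k^2-1$: $-k\in A_n=[-1-\sqrt{k^2-1},-\sqrt{k^2-2})$, and $$\mathbb{P}\{S_{n-1}\in A_n\}=\mathbb{P}\{S_{k^2-2}=k\}=\binom{k^2-2}{k(k-1)/2-1}2^{-(k^2-2)},\qquad \mathbb{P}\{S_{n-1}\in B_n\}=0.$$ (ii) For $n=k^2+2i$ with $i\in\{0,1,\dots,k-1\}$: $-1-k\in A_n=[-1-\sqrt{k^2+2i},-\sqrt{k^2+2i-1})$, and $$\mathbb{P}\{S_{n-1}\in A_n\}=\mathbb{P}\{S_{k^2+2i-1}=k+1\}=\binom{k^2+2i-1}{k(k-1)/2+i-1}2^{-(k^2+2i-1)},\qquad \mathbb{P}\{S_{n-1}\in B_n\}=0.$$ (iii) For $n=k^2+1+2i$ with $i\in\{0,1,\dots,k-1\}$: $-k\in B_n=[-\sqrt{k^2+2i},1-\sqrt{k^2+1+2i})$, and $$\mathbb{P}\{S_{n-1}\in B_n\}=\mathbb{P}\{S_{k^2+2i}=k\}=\binom{k^2+2i}{k(k-1)/2+i}2^{-(k^2+2i)},\qquad \mathbb{P}\{S_{n-1}\in A_n\}=0.$$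
   Context: A Rademacher random variable takes the values $1$ and $-1$ each with probability $1/2$. *)

(* Defs.v *)
From HB Require Import structures.
From mathcomp Require Import all_boot all_order all_algebra.
From mathcomp Require Import all_classical all_reals all_analysis.
Set Implicit Arguments. Unset Strict Implicit. Unset Printing Implicit Defensive.
Import Order.TTheory GRing.Theory Num.Theory.
Local Open Scope classical_set_scope.
Local Open Scope ring_scope.

Section Defs.
Context {R : realType} {d : measure_display} {T : measurableType d}.

Definition rademacher (P : probability T R) (X : T -> R) : Prop :=
  P [set t | X t = 1] = (1 / 2 : R)%:E /\ P [set t | X t = -1] = (1 / 2 : R)%:E.

Definition mutually_independent (P : probability T R) (eps : nat -> T -> R) : Prop :=
  forall (n : nat) (B : nat -> set R), (forall i, measurable (B i)) ->
    P (\bigcap_(i in `I_n) (eps i @^-1` B i)) = (\prod_(i < n) P (eps i @^-1` B i))%E.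

Definition Ssum (eps : nat -> T -> R) (m : nat) : T -> R :=
  fun t => \sum_(i < m) eps i t.
End Defs.

Definition Aint {R : realType} (n : nat) : set R :=
  `[(-1 - Num.sqrt (n%:R : R)), (- Num.sqrt (n%:R - 1 : R))[.
Definition Bint {R : realType} (n : nat) : set R :=
  `[(- Num.sqrt (n%:R - 1 : R)), (1 - Num.sqrt (n%:R : R))[.

(* Main.v *)
Require Import Defs.
From HB Require Import structures.
From mathcomp Require Import all_boot all_order all_algebra.
From mathcomp Require Import all_classical all_reals all_analysis.
From mathcomp Require Import lra zify.
Import Order.TTheory GRing.Theory Num.Theory.
Local Open Scope classical_set_scope.
Local Open Scope ring_scope.

Section Meas.
Context {R : realType} {d : measure_display} {T : measurableType d}.
Context (P : probability T R) (eps : nat -> T -> R).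
Context (meps : forall i, measurable_fun setT (eps i)).
Context (rad : forall i, rademacher P (eps i)).
Context (ind : mutually_independent P eps).

Lemma bigU_mem (I : eqType) (r : seq I) (F : I -> set T) t :
  (\big[setU/set0]_(i <- r) F i) t -> exists j, j \in r /\ F j t.
Proof.
elim: r => [|x r IH]; first by rewrite big_nil.
rewrite big_cons => -[Fx|/IH [j [jr Fj]]]; first by exists x; rewrite mem_head.
by exists j; rewrite in_cons jr orbT.
Qed.

Lemma add_seq (I : eqType) (r : seq I) (F : I -> set T) : uniq r ->
  (forall i, measurable (F i)) -> (forall i j, i != j -> F i `&` F j = set0) ->
  P (\big[setU/set0]_(i <- r) F i) = (\sum_(i <- r) P (F i))%E.
Proof.
move=> + mF dF; elim: r => [|x r IH]; first by rewrite !big_nil measure0.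
rewrite /= => /andP[xr ur]; rewrite !big_cons measureU //.
- by congr (_ + _)%E; exact: IH ur.
- by apply: bigsetU_measurable => i _; apply: mF.
- apply/seteqP; split => t //= [Ft]; move/bigU_mem => [j [jr Fj]].
  have: F x `&` F j = set0 by apply: dF; apply: contraNneq xr => ->.
  by move/seteqP => [+ _] => /(_ t (conj Ft Fj)).
Qed.

Definition sg m (s : {set 'I_m}) (i : nat) : R :=
  if [exists j in s, val j == i] then 1 else -1.
Arguments sg {m}.

Definition E m (s : {set 'I_m}) := \bigcap_(i in `I_m) eps i @^-1` [set sg s i].
Definition G m := \bigcap_(i in `I_m) eps i @^-1` [set x | x = 1 \/ x = -1].
Arguments E {m}.

Lemma mpre i (A : set R) : measurable A -> measurable (eps i @^-1` A).
Proof. by move=> mA; rewrite -[X in measurable X]setTI; apply: meps. Qed.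

Lemma mE m s : measurable (@E m s).
Proof.
apply: fin_bigcap_measurable; first exact: finite_II.
by move=> i _; apply: mpre; apply: measurable_set1.
Qed.

Lemma mG m : measurable (G m).
Proof.
apply: fin_bigcap_measurable; first exact: finite_II.
move=> i _; apply: mpre.
have -> : [set x : R | x = 1 \/ x = -1] = [set 1] `|` [set -1] by [].
by apply: measurableU; apply: measurable_set1.
Qed.

Lemma PE m s : P (@E m s) = ((1/2)^+m)%:E.
Proof.
rewrite /E ind; last by move=> i; apply: measurable_set1.
rewrite (eq_bigr (fun _ => (1/2 : R)%:E)); first by rewrite prodEFin prodr_const card_ord.
move=> i _; rewrite /sg; case: ifP => _; [exact: (rad i).1 | exact: (rad i).2].
Qed.

Lemma sgE m (s : {set 'I_m}) (j : 'I_m) : sg s j = if j \in s then 1 else -1.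
Proof.
rewrite /sg; congr (if _ then _ else _); apply/existsP/idP.
  by move=> [j' /andP[j's /eqP/val_inj <-]].
by move=> js; exists j; rewrite js eqxx.
Qed.

Lemma PG m : P (G m) = 1%E.
Proof.
rewrite /G ind; last first.
  move=> i; have -> : [set x : R | x = 1 \/ x = -1] = [set 1] `|` [set -1] by [].
  by apply: measurableU; apply: measurable_set1.
rewrite big1 // => i _.
have -> : eps i @^-1` [set x | x = 1 \/ x = -1] =
  [set t | eps i t = 1] `|` [set t | eps i t = -1] by [].
rewrite measureU.
- transitivity ((1/2 : R)%:E + (1/2 : R)%:E)%E.
    by congr (_ + _)%E; [exact: (rad i).1 | exact: (rad i).2].
  by rewrite -EFinD; congr (_%:E); lra.
- exact: (mpre _ _ (measurable_set1 _)).
- exact: (mpre _ _ (measurable_set1 _)).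
- apply/seteqP; split => t //= [-> h]; move: h; lra.
Qed.

Lemma null_compl m X : measurable X -> P X = P (X `&` G m).
Proof.
move=> mX; rewrite (measureDI P mX (mG m)).
suff h0 : P (X `\` G m) = 0%E.
  transitivity (0 + P (X `&` G m))%E; last by rewrite add0e.
  by congr (_ + _)%E; exact: h0.
apply/le_anti; rewrite measure_ge0 andbT.
have : P (~` G m) = 0%E.
  by rewrite probability_setC; [rewrite PG subee | exact: mG].
move=> <-; apply: le_measure; rewrite ?inE.
- by apply: measurableD => //; exact: mG.
- by apply: measurableC; exact: mG.
- by move=> t [].
Qed.

Lemma E_disj m (s s' : {set 'I_m}) : s != s' -> E s `&` E s' = set0.
Proof.
move=> ss; apply/seteqP; split => t //= [h1 h2]; apply: (negP ss).
apply/eqP/setP => j.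
have e1 := h1 j (ltn_ord j); have e2 := h2 j (ltn_ord j).
move: e1 e2; rewrite /= !sgE => ->.
by case: (j \in s); case: (j \in s') => //= h; move: h; lra.
Qed.

Lemma G_decomp m X : X `&` G m = \big[setU/set0]_(s <- index_enum {set 'I_m}) (X `&` E s).
Proof.
apply/seteqP; split => t.
  move=> [Xt Gt].
  set s0 := [set j : 'I_m | eps j t == 1]%SET.
  have Es0 : E s0 t.
    move=> i /= im; have := Gt i im; rewrite /= /sg.
    have -> : [exists j in s0, val j == i] = (eps i t == 1).
      apply/existsP/idP.
        by move=> [j /andP[]]; rewrite inE => /eqP h /eqP <-; rewrite h.
      by move=> h; exists (Ordinal im); rewrite inE h eqxx.
    by case: eqP => [-> | h] // [] .
  have : s0 \in index_enum {set 'I_m} by rewrite mem_index_enum.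
  elim: (index_enum _) => // x r IH; rewrite in_cons big_cons.
  by case/orP => [/eqP <-|/IH]; [left | right].
move/bigU_mem => [s [_ [Xt Et]]]; split => // i im.
have := Et i im; rewrite /= /sg; case: ifP => _ ->; [left | right]; done.
Qed.

Definition v m (s : {set 'I_m}) : R := (2 * #|s|)%:R - m%:R.
Arguments v {m}.

Lemma SsumE m (s : {set 'I_m}) t : E s t -> Ssum eps m t = v s.
Proof.
move=> Et; rewrite /Ssum (eq_bigr (fun i : 'I_m => if i \in s then 1 else -1)); last first.
  by move=> i _; rewrite -sgE; apply: (Et i (ltn_ord i)).
rewrite (eq_bigr (fun i : 'I_m => (if i \in s then 2 else 0) - 1)); last first.
  by move=> i _; case: (i \in s) => //; lra.
rewrite sumrB -big_mkcond /= sumr_const sumr_const card_ord /v natrM.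
by rewrite mulr_natr.
Qed.

Lemma pieceE m (s : {set 'I_m}) (A : set R) :
  P (Ssum eps m @^-1` A `&` E s) = if `[< A (v s) >] then ((1/2)^+m)%:E else 0%E.
Proof.
case: (asboolP (A (v s))) => h.
  rewrite -(PE _ s); congr (P _); apply/seteqP; split => t; first by case.
  by move=> Et; split => //=; rewrite (SsumE _ _ _ Et).
rewrite -(measure0 P); congr (P _); apply/seteqP; split => t //= [+ Et].
by rewrite (SsumE _ _ _ Et).
Qed.

Lemma mSsum m A : measurable A -> measurable (Ssum eps m @^-1` A).
Proof.
move=> mA; rewrite -[X in measurable X]setTI; apply: (_ : measurable_fun setT (Ssum eps m)) => //.
by apply: measurable_sum => i; apply: meps.
Qed.

Lemma keyE m A : measurable A ->
  P (Ssum eps m @^-1` A) = (\sum_(s : {set 'I_m}) (if `[< A (v s) >] then ((1/2)^+m)%:E else 0))%E.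
Proof.
move=> mA; rewrite (null_compl m _ (mSsum m _ mA)) G_decomp add_seq.
- by apply: eq_bigr => s _; rewrite pieceE.
- exact: index_enum_uniq.
- by move=> s; apply: measurableI; [exact: mSsum | exact: mE].
- move=> s s' ss; apply/seteqP; split => t // [[_ h1] [_ h2]].
  by move: (E_disj _ _ _ ss) => /seteqP [+ _]; apply.
Qed.

Lemma cntE m (A : set R) t0 : measurable A ->
  (forall t, (t <= m)%N -> (A ((2 * t)%:R - m%:R) <-> t = t0)) ->
  P (Ssum eps m @^-1` A) = ('C(m, t0)%:R / 2 ^+ m)%:E.
Proof.
move=> mA hA; rewrite keyE //.
rewrite (eq_bigr (fun s : {set 'I_m} => if #|s| == t0 then ((1/2)^+m)%:E else 0%E)); last first.
  move=> s _; have sm : (#|s| <= m)%N by rewrite -[X in (_ <= X)%N](card_ord m) max_card.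
  by congr (if _ then _ else _); apply/asboolP/eqP => /(hA _ sm).
rewrite -big_mkcond /= sumr_const.
have -> : #|[pred s : {set 'I_m} | #|s| == t0]| = 'C(m, t0).
  by rewrite -[X in 'C(X, _)](card_ord m) -card_draws cardsE.
transitivity ((((1/2 : R))^+m *+ 'C(m, t0))%:E); first exact: (esym (EFin_natmul _ _)). congr (_%:E).
by rewrite -mulr_natr expr_div_n expr1n mulrC mul1r.
Qed.

Lemma zeroE m (A : set R) : measurable A ->
  (forall t, (t <= m)%N -> ~ A ((2 * t)%:R - m%:R)) ->
  P (Ssum eps m @^-1` A) = 0%E.
Proof.
move=> mA hA; rewrite keyE // big1 // => s _.
have sm : (#|s| <= m)%N by rewrite -[X in (_ <= X)%N](card_ord m) max_card.
by case: asboolP => // /(hA _ sm).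
Qed.
End Meas.
Section Arith.
Context {R : realType}.

Lemma sq_lt (a b : nat) : (a ^ 2 < b)%N -> (a%:R : R) < Num.sqrt b%:R.
Proof.
move=> h; have -> : (a%:R : R) = Num.sqrt (a ^ 2)%:R.
  by rewrite natrX sqrtr_sqr ger0_norm.
by rewrite ltr_sqrt ?ltr_nat // ltr0n (leq_ltn_trans _ h).
Qed.

Lemma sq_le (a b : nat) : (a ^ 2 <= b)%N -> (a%:R : R) <= Num.sqrt b%:R.
Proof.
move=> h; have -> : (a%:R : R) = Num.sqrt (a ^ 2)%:R.
  by rewrite natrX sqrtr_sqr ger0_norm.
by rewrite ler_sqrt ?ler_nat.
Qed.

Lemma sq_gt (a b : nat) : (b < a ^ 2)%N -> Num.sqrt b%:R < (a%:R : R).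
Proof.
move=> h; have -> : (a%:R : R) = Num.sqrt (a ^ 2)%:R.
  by rewrite natrX sqrtr_sqr ger0_norm.
by rewrite ltr_sqrt ?ltr_nat // ltr0n (leq_ltn_trans _ h).
Qed.

Lemma sq_ge (a b : nat) : (b <= a ^ 2)%N -> Num.sqrt b%:R <= (a%:R : R).
Proof.
move=> h; have -> : (a%:R : R) = Num.sqrt (a ^ 2)%:R.
  by rewrite natrX sqrtr_sqr ger0_norm.
by rewrite ler_sqrt ?ler_nat.
Qed.

Lemma Amem n (x : R) : (1 <= n)%N ->
  Aint n x <-> (-1 - Num.sqrt n%:R <= x /\ x < - Num.sqrt (n - 1)%:R).
Proof.
move=> n1; rewrite /Aint /= in_itv /= natrB //.
by split => [/andP[]|[-> ->]].
Qed.

Lemma Bmem n (x : R) : (1 <= n)%N ->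
  Bint n x <-> (- Num.sqrt (n - 1)%:R <= x /\ x < 1 - Num.sqrt n%:R).
Proof.
move=> n1; rewrite /Bint /= in_itv /= natrB //.
by split => [/andP[]|[-> ->]].
Qed.

Lemma half_even k : (1 <= k)%N -> (2 * (k * (k - 1) %/ 2) = k * (k - 1))%N.
Proof.
move=> k1; rewrite mul2n -[RHS](odd_double_half (k * (k-1))).
rewrite divn2.
suff -> : odd (k * (k - 1)) = false by [].
case: k k1 => // k _; rewrite subn1 /= oddM /=; by case: (odd k).
Qed.


Lemma natrB1 k : (1 <= k)%N -> (((k - 1)%N)%:R : R) = k%:R - 1.
Proof. by move=> k1; rewrite natrB. Qed.

Lemma natr_pred k : (k.-1%:R : R) = ((k - 1)%N)%:R.
Proof. by rewrite subn1. Qed.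

Lemma ci_A k t : (2 <= k)%N ->
  (Aint (k ^ 2 - 1)%N ((2 * t)%:R - ((k ^ 2 - 2)%N)%:R : R) <-> t = (k * (k - 1) %/ 2 - 1)%N).
Proof.
move=> k2; have hc := half_even k (ltnW k2); set c := (k * (k - 1) %/ 2)%N in hc *.
have ha : (((k - 1)%N)%:R : R) < Num.sqrt ((k ^ 2 - 1 - 1)%N)%:R by apply: sq_lt; nia.
have ha' : Num.sqrt ((k ^ 2 - 1 - 1)%N)%:R < (k%:R : R) by apply: sq_gt; nia.
have hb : (((k - 1)%N)%:R : R) <= Num.sqrt ((k ^ 2 - 1)%N)%:R by apply: sq_le; nia.
have hb' : Num.sqrt ((k ^ 2 - 1)%N)%:R < (k%:R : R) by apply: sq_gt; nia.
rewrite (natrB1 k (ltnW k2)) in ha hb.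
rewrite Amem; last by nia.
split.
  move=> [h1 h2].
  have i1 : (k ^ 2 - 2 < 2 * t + 1 + k)%N by rewrite -(ltr_nat R) [(2 * t + 1 + k)%:R]natrD [(2 * t + 1)%:R]natrD; lra.
  have i2 : (2 * t + k < k ^ 2 - 2 + 1)%N by rewrite -(ltr_nat R) [(2 * t + k)%:R]natrD [(k ^ 2 - 2 + 1)%:R]natrD; lra.
  nia.
move=> ->.
have e : ((2 * (c - 1))%N%:R : R) = ((k ^ 2 - 2)%N)%:R - k%:R.
  apply/eqP; rewrite eq_sym subr_eq -natrD eqr_nat; apply/eqP; nia.
rewrite e; lra.
Qed.

Lemma ci_B k t : (2 <= k)%N -> (t <= k ^ 2 - 2)%N ->
  ~ (Bint (k ^ 2 - 1)%N ((2 * t)%:R - ((k ^ 2 - 2)%N)%:R : R)).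
Proof.
move=> k2 _; have hc := half_even k (ltnW k2); set c := (k * (k - 1) %/ 2)%N in hc *.
have ha' : Num.sqrt ((k ^ 2 - 1 - 1)%N)%:R < (k%:R : R) by apply: sq_gt; nia.
have hb : (((k - 1)%N)%:R : R) <= Num.sqrt ((k ^ 2 - 1)%N)%:R by apply: sq_le; nia.
rewrite (natrB1 k (ltnW k2)) in hb.
rewrite Bmem; last by nia.
move=> [h1 h2].
have i1 : (k ^ 2 - 2 < 2 * t + k)%N by rewrite -(ltr_nat R) [(2 * t + k)%:R]natrD; lra.
have i2 : (2 * t + k < k ^ 2 - 2 + 2)%N by rewrite -(ltr_nat R) [(2 * t + k)%:R]natrD [(k ^ 2 - 2 + 2)%:R]natrD; lra.
nia.
Qed.


Lemma single m t j : (((2 * t)%:R - m%:R : R) = j%:R <-> (2 * t = m + j)%N).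
Proof.
split => [h|h]; last by rewrite h natrD; lra. by apply/eqP; rewrite -(eqr_nat R) natrD; apply/eqP; lra.
Qed.

Lemma cii_A k i t : (2 <= k)%N -> (i < k)%N ->
  (Aint (k ^ 2 + 2 * i)%N ((2 * t)%:R - ((k ^ 2 + 2 * i - 1)%N)%:R : R)
    <-> t = (k * (k - 1) %/ 2 + i - 1)%N).
Proof.
move=> k2 ik; have hc := half_even k (ltnW k2); set c := (k * (k - 1) %/ 2)%N in hc *.
have ha' : Num.sqrt ((k ^ 2 + 2 * i - 1)%N)%:R < (((k + 1)%N)%:R : R) by apply: sq_gt; nia.
have ha : (((k - 1)%N)%:R : R) < Num.sqrt ((k ^ 2 + 2 * i - 1)%N)%:R by apply: sq_lt; nia.
have hb : ((k%:R : R)) <= Num.sqrt ((k ^ 2 + 2 * i)%N)%:R by apply: sq_le; nia.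
have hb' : Num.sqrt ((k ^ 2 + 2 * i)%N)%:R < (((k + 1)%N)%:R : R) by apply: sq_gt; nia.
rewrite (natrB1 k (ltnW k2)) in ha.
rewrite (natrD _ k 1) in ha' hb'.
rewrite Amem; last by nia.
split.
  move=> [h1 h2].
  have i1 : (k ^ 2 + 2 * i - 1 < 2 * t + 2 + k)%N by rewrite -(ltr_nat R) [(2 * t + 2 + k)%:R]natrD [(2 * t + 2)%:R]natrD; lra.
  have i2 : (2 * t + k < k ^ 2 + 2 * i - 1 + 1)%N by rewrite -(ltr_nat R) [(2 * t + k)%:R]natrD [(k ^ 2 + 2 * i - 1 + 1)%:R]natrD; lra.
  nia.
move=> ->.
have e : ((2 * (c + i - 1))%N%:R : R) = ((k ^ 2 + 2 * i - 1)%N)%:R - (k + 1)%N%:R.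
  apply/eqP; rewrite eq_sym subr_eq -natrD eqr_nat; apply/eqP; nia.
rewrite e (natrD _ k 1); lra.
Qed.

Lemma cii_B k i t : (2 <= k)%N -> (i < k)%N ->
  ~ (Bint (k ^ 2 + 2 * i)%N ((2 * t)%:R - ((k ^ 2 + 2 * i - 1)%N)%:R : R)).
Proof.
move=> k2 ik; have hc := half_even k (ltnW k2); set c := (k * (k - 1) %/ 2)%N in hc *.
have ha' : Num.sqrt ((k ^ 2 + 2 * i - 1)%N)%:R < (((k + 1)%N)%:R : R) by apply: sq_gt; nia.
have hb : ((k%:R : R)) <= Num.sqrt ((k ^ 2 + 2 * i)%N)%:R by apply: sq_le; nia.
rewrite (natrD _ k 1) in ha'.
rewrite Bmem; last by nia.
move=> [h1 h2].
have i1 : (k ^ 2 + 2 * i - 1 < 2 * t + 1 + k)%N by rewrite -(ltr_nat R) [(2 * t + 1 + k)%:R]natrD [(2 * t + 1)%:R]natrD; lra.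
have i2 : (2 * t + k < k ^ 2 + 2 * i - 1 + 1)%N by rewrite -(ltr_nat R) [(2 * t + k)%:R]natrD [(k ^ 2 + 2 * i - 1 + 1)%:R]natrD; lra.
nia.
Qed.

Lemma ciii_B k i t : (2 <= k)%N -> (i < k)%N ->
  (Bint (k ^ 2 + 1 + 2 * i)%N ((2 * t)%:R - ((k ^ 2 + 2 * i)%N)%:R : R)
    <-> t = (k * (k - 1) %/ 2 + i)%N).
Proof.
move=> k2 ik; have hc := half_even k (ltnW k2); set c := (k * (k - 1) %/ 2)%N in hc *.
have ha : (k%:R : R) <= Num.sqrt ((k ^ 2 + 1 + 2 * i - 1)%N)%:R by apply: sq_le; nia.
have ha' : Num.sqrt ((k ^ 2 + 1 + 2 * i - 1)%N)%:R < (((k + 1)%N)%:R : R) by apply: sq_gt; nia.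
have hb : (k%:R : R) < Num.sqrt ((k ^ 2 + 1 + 2 * i)%N)%:R by apply: sq_lt; nia.
have hb' : Num.sqrt ((k ^ 2 + 1 + 2 * i)%N)%:R < (((k + 1)%N)%:R : R) by apply: sq_gt; nia.
rewrite (natrD _ k 1) in ha' hb'.
rewrite Bmem; last by nia.
split.
  move=> [h1 h2].
  have i1 : (k ^ 2 + 2 * i < 2 * t + 1 + k)%N by rewrite -(ltr_nat R) [(2 * t + 1 + k)%:R]natrD [(2 * t + 1)%:R]natrD; lra.
  have i2 : (2 * t + k < k ^ 2 + 2 * i + 1)%N by rewrite -(ltr_nat R) [(2 * t + k)%:R]natrD [(k ^ 2 + 2 * i + 1)%:R]natrD; lra.
  nia.
move=> ->.
have e : ((2 * (c + i))%N%:R : R) = ((k ^ 2 + 2 * i)%N)%:R - k%:R.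
  apply/eqP; rewrite eq_sym subr_eq -natrD eqr_nat; apply/eqP; nia.
rewrite e; lra.
Qed.

Lemma ciii_A k i t : (2 <= k)%N -> (i < k)%N ->
  ~ (Aint (k ^ 2 + 1 + 2 * i)%N ((2 * t)%:R - ((k ^ 2 + 2 * i)%N)%:R : R)).
Proof.
move=> k2 ik; have hc := half_even k (ltnW k2); set c := (k * (k - 1) %/ 2)%N in hc *.
have ha : (k%:R : R) <= Num.sqrt ((k ^ 2 + 1 + 2 * i - 1)%N)%:R by apply: sq_le; nia.
have hb' : Num.sqrt ((k ^ 2 + 1 + 2 * i)%N)%:R < (((k + 1)%N)%:R : R) by apply: sq_gt; nia.
rewrite (natrD _ k 1) in hb'.
rewrite Amem; last by nia.
move=> [h1 h2].
have i1 : (k ^ 2 + 2 * i < 2 * t + 2 + k)%N by rewrite -(ltr_nat R) [(2 * t + 2 + k)%:R]natrD [(2 * t + 2)%:R]natrD; lra.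
have i2 : (2 * t + k < k ^ 2 + 2 * i)%N by rewrite -(ltr_nat R) [(2 * t + k)%:R]natrD; lra.
nia.
Qed.

End Arith.

Theorem lemma2p1 (R : realType) (d : measure_display) (T : measurableType d)
  (P : probability T R) (eps : nat -> T -> R) :
  (forall i, measurable_fun setT (eps i)) ->
  (forall i, rademacher P (eps i)) ->
  mutually_independent P eps ->
  forall k : nat, (2 <= k)%N ->
  [/\
   (* (i) n = k^2 - 1 *)
   (let n := (k ^ 2 - 1)%N in
    [/\ Aint n (- (k%:R : R)),
        P (Ssum eps n.-1 @^-1` Aint n) = P (Ssum eps (k ^ 2 - 2)%N @^-1` [set (k%:R : R)]),
        P (Ssum eps (k ^ 2 - 2)%N @^-1` [set (k%:R : R)])
          = ('C(k ^ 2 - 2, k * (k - 1) %/ 2 - 1)%:R / 2 ^+ (k ^ 2 - 2) : R)%:E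
      & P (Ssum eps n.-1 @^-1` Bint n) = 0%E]),
   (* (ii) n = k^2 + 2i *)
   (forall i : nat, (i < k)%N ->
    let n := (k ^ 2 + 2 * i)%N in
    [/\ Aint n (- 1 - (k%:R : R)),
        P (Ssum eps n.-1 @^-1` Aint n)
          = P (Ssum eps (k ^ 2 + 2 * i - 1)%N @^-1` [set (k.+1%:R : R)]),
        P (Ssum eps (k ^ 2 + 2 * i - 1)%N @^-1` [set (k.+1%:R : R)])
          = ('C(k ^ 2 + 2 * i - 1, k * (k - 1) %/ 2 + i - 1)%:R
              / 2 ^+ (k ^ 2 + 2 * i - 1) : R)%:E
      & P (Ssum eps n.-1 @^-1` Bint n) = 0%E])
 & (* (iii) n = k^2 + 1 + 2i *)
   (forall i : nat, (i < k)%N ->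
    let n := (k ^ 2 + 1 + 2 * i)%N in
    [/\ Bint n (- (k%:R : R)),
        P (Ssum eps n.-1 @^-1` Bint n)
          = P (Ssum eps (k ^ 2 + 2 * i)%N @^-1` [set (k%:R : R)]),
        P (Ssum eps (k ^ 2 + 2 * i)%N @^-1` [set (k%:R : R)])
          = ('C(k ^ 2 + 2 * i, k * (k - 1) %/ 2 + i)%:R / 2 ^+ (k ^ 2 + 2 * i) : R)%:E
      & P (Ssum eps n.-1 @^-1` Aint n) = 0%E])].
Proof.
move=> meps rad ind k k2.
have hc := half_even k (ltnW k2); set c := (k * (k - 1) %/ 2)%N in hc *.
have mA n : measurable (Aint n : set R) by exact: measurable_itv.
have mB n : measurable (Bint n : set R) by exact: measurable_itv.
have m1 (x : R) : measurable [set x] by exact: measurable_set1.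
split.
- move=> n; rewrite /n.
  have em : ((k ^ 2 - 1).-1 = k ^ 2 - 2)%N by rewrite subn1; nia.
  rewrite em.
  have P1 : P (Ssum eps (k ^ 2 - 2)%N @^-1` [set (k%:R : R)])
          = ('C(k ^ 2 - 2, c - 1)%:R / 2 ^+ (k ^ 2 - 2) : R)%:E.
    rewrite (cntE P eps meps rad ind (k ^ 2 - 2) [set (k%:R : R)] (k ^ 2 - 2 - (c - 1)) (m1 _)).
      by rewrite bin_sub //; nia.
    by move=> t _; apply: iff_trans (single _ _ _) _; split => ?; nia.
  split => //.
  + have hh : (2 * (c - 1) + k = k ^ 2 - 2)%N by nia.
    suff -> : (- (k%:R) : R) = ((2 * (c - 1))%N)%:R - ((k ^ 2 - 2)%N)%:R.
      by apply/(ci_A _ _ k2).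
    by rewrite -hh (natrD _ _ k); lra.
  + rewrite P1 (cntE P eps meps rad ind (k ^ 2 - 2) (Aint (k ^ 2 - 1)) (c - 1) (mA _)) //.
    by move=> t _; exact: ci_A.
  + rewrite (zeroE P eps meps rad ind (k ^ 2 - 2) (Bint (k ^ 2 - 1)) (mB _)) //.
    by move=> t; exact: ci_B.
- move=> i ik n; rewrite /n.
  have em : ((k ^ 2 + 2 * i).-1 = k ^ 2 + 2 * i - 1)%N by rewrite subn1.
  rewrite em.
  have P1 : P (Ssum eps (k ^ 2 + 2 * i - 1)%N @^-1` [set (k.+1%:R : R)])
          = ('C(k ^ 2 + 2 * i - 1, c + i - 1)%:R / 2 ^+ (k ^ 2 + 2 * i - 1) : R)%:E.
    rewrite (cntE P eps meps rad ind (k ^ 2 + 2 * i - 1) [set (k.+1%:R : R)]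
      (k ^ 2 + 2 * i - 1 - (c + i - 1)) (m1 _)).
      by rewrite bin_sub //; nia.
    by move=> t _; apply: iff_trans (single _ _ _) _; split => ?; nia.
  split => //.
  + have hh : (2 * (c + i - 1) + (k + 1) = k ^ 2 + 2 * i - 1)%N by nia.
    suff -> : (- 1 - (k%:R) : R) = ((2 * (c + i - 1))%N)%:R - ((k ^ 2 + 2 * i - 1)%N)%:R.
      by apply/(cii_A _ _ _ k2 ik).
    by rewrite -hh (natrD _ _ (k + 1)) (natrD _ k 1); lra.
  + rewrite P1 (cntE P eps meps rad ind (k ^ 2 + 2 * i - 1) (Aint (k ^ 2 + 2 * i)) (c + i - 1) (mA _)) //.
    by move=> t _; exact: cii_A.
  + rewrite (zeroE P eps meps rad ind (k ^ 2 + 2 * i - 1) (Bint (k ^ 2 + 2 * i)) (mB _)) //.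
    by move=> t _; exact: cii_B.
- move=> i ik n; rewrite /n.
  have em : ((k ^ 2 + 1 + 2 * i).-1 = k ^ 2 + 2 * i)%N by rewrite -subn1; lia.
  rewrite em.
  have P1 : P (Ssum eps (k ^ 2 + 2 * i)%N @^-1` [set (k%:R : R)])
          = ('C(k ^ 2 + 2 * i, c + i)%:R / 2 ^+ (k ^ 2 + 2 * i) : R)%:E.
    rewrite (cntE P eps meps rad ind (k ^ 2 + 2 * i) [set (k%:R : R)]
      (k ^ 2 + 2 * i - (c + i)) (m1 _)).
      by rewrite bin_sub //; nia.
    by move=> t _; apply: iff_trans (single _ _ _) _; split => ?; nia.
  split => //.
  + have hh : (2 * (c + i) + k = k ^ 2 + 2 * i)%N by nia.
    suff -> : (- (k%:R) : R) = ((2 * (c + i))%N)%:R - ((k ^ 2 + 2 * i)%N)%:R.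
      by apply/(ciii_B _ _ _ k2 ik).
    by rewrite -hh (natrD _ _ k); lra.
  + rewrite P1 (cntE P eps meps rad ind (k ^ 2 + 2 * i) (Bint (k ^ 2 + 1 + 2 * i)) (c + i) (mB _)) //.
    by move=> t _; exact: ciii_B.
  + rewrite (zeroE P eps meps rad ind (k ^ 2 + 2 * i) (Aint (k ^ 2 + 1 + 2 * i)) (mA _)) //.
    by move=> t _; exact: ciii_A.
Qed.
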